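(* Let $V=\{0,1,2,3,4\}$ (so $n=3$), with nominal durations $\bar\theta_1=\bar\theta_2=\bar\theta_3=1$, maximum deviations $\hat\theta_1=\hat\theta_2=\hat\theta_3=1$, $\bar\theta_0=\hat\theta_0=\bar\theta_4=\hat\theta_4=0$, budget $\Gamma=1$, and let $y\in\{0,1\}^{V\times V}$ be given by $y_{ij}=1$ if and only if $(i,j)\in\{(0,1),(1,2),(1,3),(2,4),(3,4)\}$. For $M>0$ consider the mixed-integer program \[ \max\ \sum_{(i,j)\in V^2}\bigl(\bar\theta_i\alpha_{ij}+\hat\theta_i w_{ij}-M(1-y_{ij})\alpha_{ij}\bigr) \] subject to $\sum_{(j,i)\in V^2}\alpha_{ji}-\sum_{(i,j)\in V^2}\alpha_{ij}=0$ for all $j\in V$ (flow conservation: total flow into $j$ equals total flow out of $j$); $\sum_{i\in V}\alpha_{0i}=1$; $\sum_{i\in V}\alpha_{i4}=1$; $w_{ij}\le\delta_i$ and $w_{ij}\le\alpha_{ij}$ for all $(i,j)\in V^2$; $\sum_{i\in V}\delta_i\le\Gamma$; $0\le\delta_i\le1$ for all $i\in V$; $\alpha_{ij}\in\{0,1\}$ and $w_{ij}\ge0$ for all $(i,j)\in V^2$. Then for all sufficiently large $M$, the optimal value of the linear relaxation of this program (obtained by replacing $\alpha_{ij}\in\{0,1\}$ with $\alpha_{ij}\in[0,1]$) is strictly greater than the optimal value of the mixed-integer program itself; in particular the program is not equivalent to its linear relaxation.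
   Context: This program is the linearised adversarial sub-problem of the two-stage robust resource-constrained project scheduling problem: $V=\{0,\dots,n+1\}$ is the set of activities with dummy source $0$ and dummy sink $n+1$, $y_{ij}=1$ indicates that $(i,j)$ is a precedence arc of the (extended) project network, activity $i$ has duration $\bar\theta_i+\delta_i\hat\theta_i$, and an adversary chooses the delay fractions $\delta$ (with budget $\Gamma$) together with a unit flow $\alpha$ from the source to the sink so as to maximise the total duration along the flow. *)

(* Defs.v *)
From mathcomp Require Import all_boot all_order all_algebra.
Set Implicit Arguments. Unset Strict Implicit. Unset Printing Implicit Defensive.
Import Order.TTheory GRing.Theory Num.Theory.
Local Open Scope ring_scope.

(* Activities V = {0,1,2,3,4}: dummy source 0, dummy sink 4 (n = 3). *)
Definition V := 'I_5.
Definition src : V := inord 0.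
Definition snk : V := inord 4.

Section Instance.
Variable R : realFieldType.

Definition thbar (i : V) : R := if (val i == 0%N) || (val i == 4%N) then 0 else 1.
Definition thhat (i : V) : R := if (val i == 0%N) || (val i == 4%N) then 0 else 1.
Definition Gamma : R := 1.

Definition yarc (i j : V) : bool :=
  (val i, val j) \in [:: (0,1); (1,2); (1,3); (2,4); (3,4)]%N.
Definition y (i j : V) : R := if yarc i j then 1 else 0.

Definition objective (M : R) (alpha w : V -> V -> R) : R :=
  \sum_(i : V) \sum_(j : V)
     (thbar i * alpha i j + thhat i * w i j - M * (1 - y i j) * alpha i j).

Definition common_constraints (alpha w : V -> V -> R) (delta : V -> R) : Prop :=
  (forall j : V, \sum_(i : V) alpha i j = \sum_(i : V) alpha j i) /\
  \sum_(i : V) alpha src i = 1 /\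
  \sum_(i : V) alpha i snk = 1 /\
  (forall i j : V, w i j <= delta i /\ w i j <= alpha i j) /\
  \sum_(i : V) delta i <= Gamma /\
  (forall i : V, 0 <= delta i <= 1) /\
  (forall i j : V, 0 <= w i j).

Definition MIP_feasible (alpha w : V -> V -> R) (delta : V -> R) : Prop :=
  common_constraints alpha w delta /\ (forall i j : V, alpha i j = 0 \/ alpha i j = 1).

Definition LP_feasible (alpha w : V -> V -> R) (delta : V -> R) : Prop :=
  common_constraints alpha w delta /\ (forall i j : V, 0 <= alpha i j <= 1).

Definition is_opt_value
    (feas : (V -> V -> R) -> (V -> V -> R) -> (V -> R) -> Prop)
    (f : (V -> V -> R) -> (V -> V -> R) -> R) (v : R) : Prop :=
  (exists alpha w delta, feas alpha w delta /\ f alpha w = v) /\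
  (forall alpha w delta, feas alpha w delta -> f alpha w <= v).

End Instance.

(* Main.v *)
Require Import Defs.
From mathcomp Require Import all_boot all_order all_algebra.
From mathcomp Require Import ring lra.
Import Order.TTheory GRing.Theory Num.Theory.
Local Open Scope ring_scope.

Definition i0 : V := @Ordinal 5 0 isT.
Definition i1 : V := @Ordinal 5 1 isT.
Definition i2 : V := @Ordinal 5 2 isT.
Definition i3 : V := @Ordinal 5 3 isT.
Definition i4 : V := @Ordinal 5 4 isT.

Section S.
Variable R : realFieldType.
Lemma sum5 (F : V -> R) : \sum_(i : V) F i = F i0 + F i1 + F i2 + F i3 + F i4.
Proof.
rewrite !big_ord_recl big_ord0 addr0 !addrA.
by congr (_+_+_+_+_); congr F; apply: val_inj.
Qed.

Lemma src_i0 : src = i0. Proof. by apply: val_inj; rewrite /= inordK. Qed.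
Lemma snk_i4 : snk = i4. Proof. by apply: val_inj; rewrite /= inordK. Qed.

Definition G (a w : V -> V -> R) : R := a i1 i0 + w i1 i0 + a i1 i1 + w i1 i1 + a i1 i2 + w i1 i2 + a i1 i3 + w i1 i3 + a i1 i4 + w i1 i4 + a i2 i0 + w i2 i0 + a i2 i1 + w i2 i1 + a i2 i2 + w i2 i2 + a i2 i3 + w i2 i3 + a i2 i4 + w i2 i4 + a i3 i0 + w i3 i0 + a i3 i1 + w i3 i1 + a i3 i2 + w i3 i2 + a i3 i3 + w i3 i3 + a i3 i4 + w i3 i4.
Definition P (a : V -> V -> R) : R := a i0 i0 + a i0 i2 + a i0 i3 + a i0 i4 + a i1 i0 + a i1 i1 + a i1 i4 + a i2 i0 + a i2 i1 + a i2 i2 + a i2 i3 + a i3 i0 + a i3 i1 + a i3 i2 + a i3 i3 + a i4 i0 + a i4 i1 + a i4 i2 + a i4 i3 + a i4 i4.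

Lemma obj_eq (M : R) (a w : V -> V -> R) : objective M a w = G a w - M * P a.
Proof.
rewrite /objective !sum5 /thbar /thhat /y /yarc /= /G /P.
ring.
Qed.

Lemma LP_bound (a w : V -> V -> R) (delta : V -> R) :
  LP_feasible a w delta -> 1 <= P a /\ G a w - 7/2 <= 10 * (P a - 1).
Proof.
move=> [Hc Hb]; move: Hc; rewrite /common_constraints src_i0 snk_i4 /Gamma.
move=> [Hf [Hs [Ht [Hwd [Hd [Hdb Hw0]]]]]].
rewrite !sum5 in Hs Ht Hd.
have := Hf i0; rewrite !sum5 => f0.
have := Hf i1; rewrite !sum5 => f1.
have := Hf i2; rewrite !sum5 => f2.
have := Hf i3; rewrite !sum5 => f3.
have := Hf i4; rewrite !sum5 => f4.
have /andP[db0 db0'] := Hdb i0.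
have [wd00 wa00] := Hwd i0 i0.
have w000 := Hw0 i0 i0.
have [wd01 wa01] := Hwd i0 i1.
have w001 := Hw0 i0 i1.
have [wd02 wa02] := Hwd i0 i2.
have w002 := Hw0 i0 i2.
have [wd03 wa03] := Hwd i0 i3.
have w003 := Hw0 i0 i3.
have [wd04 wa04] := Hwd i0 i4.
have w004 := Hw0 i0 i4.
have /andP[db1 db1'] := Hdb i1.
have [wd10 wa10] := Hwd i1 i0.
have w010 := Hw0 i1 i0.
have [wd11 wa11] := Hwd i1 i1.
have w011 := Hw0 i1 i1.
have [wd12 wa12] := Hwd i1 i2.
have w012 := Hw0 i1 i2.
have [wd13 wa13] := Hwd i1 i3.
have w013 := Hw0 i1 i3.
have [wd14 wa14] := Hwd i1 i4.
have w014 := Hw0 i1 i4.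
have /andP[db2 db2'] := Hdb i2.
have [wd20 wa20] := Hwd i2 i0.
have w020 := Hw0 i2 i0.
have [wd21 wa21] := Hwd i2 i1.
have w021 := Hw0 i2 i1.
have [wd22 wa22] := Hwd i2 i2.
have w022 := Hw0 i2 i2.
have [wd23 wa23] := Hwd i2 i3.
have w023 := Hw0 i2 i3.
have [wd24 wa24] := Hwd i2 i4.
have w024 := Hw0 i2 i4.
have /andP[db3 db3'] := Hdb i3.
have [wd30 wa30] := Hwd i3 i0.
have w030 := Hw0 i3 i0.
have [wd31 wa31] := Hwd i3 i1.
have w031 := Hw0 i3 i1.
have [wd32 wa32] := Hwd i3 i2.
have w032 := Hw0 i3 i2.
have [wd33 wa33] := Hwd i3 i3.
have w033 := Hw0 i3 i3.
have [wd34 wa34] := Hwd i3 i4.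
have w034 := Hw0 i3 i4.
have /andP[db4 db4'] := Hdb i4.
have [wd40 wa40] := Hwd i4 i0.
have w040 := Hw0 i4 i0.
have [wd41 wa41] := Hwd i4 i1.
have w041 := Hw0 i4 i1.
have [wd42 wa42] := Hwd i4 i2.
have w042 := Hw0 i4 i2.
have [wd43 wa43] := Hwd i4 i3.
have w043 := Hw0 i4 i3.
have [wd44 wa44] := Hwd i4 i4.
have w044 := Hw0 i4 i4.
clear Hf Hwd Hdb Hw0.
have /andP[a00 a00'] := Hb i0 i0.
have /andP[a01 a01'] := Hb i0 i1.
have /andP[a02 a02'] := Hb i0 i2.
have /andP[a03 a03'] := Hb i0 i3.
have /andP[a04 a04'] := Hb i0 i4.
have /andP[a10 a10'] := Hb i1 i0.
have /andP[a11 a11'] := Hb i1 i1.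
have /andP[a12 a12'] := Hb i1 i2.
have /andP[a13 a13'] := Hb i1 i3.
have /andP[a14 a14'] := Hb i1 i4.
have /andP[a20 a20'] := Hb i2 i0.
have /andP[a21 a21'] := Hb i2 i1.
have /andP[a22 a22'] := Hb i2 i2.
have /andP[a23 a23'] := Hb i2 i3.
have /andP[a24 a24'] := Hb i2 i4.
have /andP[a30 a30'] := Hb i3 i0.
have /andP[a31 a31'] := Hb i3 i1.
have /andP[a32 a32'] := Hb i3 i2.
have /andP[a33 a33'] := Hb i3 i3.
have /andP[a34 a34'] := Hb i3 i4.
have /andP[a40 a40'] := Hb i4 i0.
have /andP[a41 a41'] := Hb i4 i1.
have /andP[a42 a42'] := Hb i4 i2.
have /andP[a43 a43'] := Hb i4 i3.
have /andP[a44 a44'] := Hb i4 i4.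
clear Hb.
rewrite /G /P; split.
lra.
lra.
Qed.

Lemma MIP_bound (a w : V -> V -> R) (delta : V -> R) :
  MIP_feasible a w delta -> 1 <= P a /\ G a w - 3 <= 4 * (P a - 1).
Proof.
move=> [Hc Hb]; move: Hc; rewrite /common_constraints src_i0 snk_i4 /Gamma.
move=> [Hf [Hs [Ht [Hwd [Hd [Hdb Hw0]]]]]].
rewrite !sum5 in Hs Ht Hd.
have := Hf i0; rewrite !sum5 => f0.
have := Hf i1; rewrite !sum5 => f1.
have := Hf i2; rewrite !sum5 => f2.
have := Hf i3; rewrite !sum5 => f3.
have := Hf i4; rewrite !sum5 => f4.
have /andP[db0 db0'] := Hdb i0.
have [wd00 wa00] := Hwd i0 i0.
have w000 := Hw0 i0 i0.
have [wd01 wa01] := Hwd i0 i1.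
have w001 := Hw0 i0 i1.
have [wd02 wa02] := Hwd i0 i2.
have w002 := Hw0 i0 i2.
have [wd03 wa03] := Hwd i0 i3.
have w003 := Hw0 i0 i3.
have [wd04 wa04] := Hwd i0 i4.
have w004 := Hw0 i0 i4.
have /andP[db1 db1'] := Hdb i1.
have [wd10 wa10] := Hwd i1 i0.
have w010 := Hw0 i1 i0.
have [wd11 wa11] := Hwd i1 i1.
have w011 := Hw0 i1 i1.
have [wd12 wa12] := Hwd i1 i2.
have w012 := Hw0 i1 i2.
have [wd13 wa13] := Hwd i1 i3.
have w013 := Hw0 i1 i3.
have [wd14 wa14] := Hwd i1 i4.
have w014 := Hw0 i1 i4.
have /andP[db2 db2'] := Hdb i2.
have [wd20 wa20] := Hwd i2 i0.
have w020 := Hw0 i2 i0.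
have [wd21 wa21] := Hwd i2 i1.
have w021 := Hw0 i2 i1.
have [wd22 wa22] := Hwd i2 i2.
have w022 := Hw0 i2 i2.
have [wd23 wa23] := Hwd i2 i3.
have w023 := Hw0 i2 i3.
have [wd24 wa24] := Hwd i2 i4.
have w024 := Hw0 i2 i4.
have /andP[db3 db3'] := Hdb i3.
have [wd30 wa30] := Hwd i3 i0.
have w030 := Hw0 i3 i0.
have [wd31 wa31] := Hwd i3 i1.
have w031 := Hw0 i3 i1.
have [wd32 wa32] := Hwd i3 i2.
have w032 := Hw0 i3 i2.
have [wd33 wa33] := Hwd i3 i3.
have w033 := Hw0 i3 i3.
have [wd34 wa34] := Hwd i3 i4.
have w034 := Hw0 i3 i4.
have /andP[db4 db4'] := Hdb i4.
have [wd40 wa40] := Hwd i4 i0.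
have w040 := Hw0 i4 i0.
have [wd41 wa41] := Hwd i4 i1.
have w041 := Hw0 i4 i1.
have [wd42 wa42] := Hwd i4 i2.
have w042 := Hw0 i4 i2.
have [wd43 wa43] := Hwd i4 i3.
have w043 := Hw0 i4 i3.
have [wd44 wa44] := Hwd i4 i4.
have w044 := Hw0 i4 i4.
clear Hf Hwd Hdb Hw0.
have b00 := Hb i0 i0.
have b01 := Hb i0 i1.
have b02 := Hb i0 i2.
have b03 := Hb i0 i3.
have b04 := Hb i0 i4.
have b10 := Hb i1 i0.
have b11 := Hb i1 i1.
have b12 := Hb i1 i2.
have b13 := Hb i1 i3.
have b14 := Hb i1 i4.
have b20 := Hb i2 i0.
have b21 := Hb i2 i1.
have b22 := Hb i2 i2.
have b23 := Hb i2 i3.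
have b24 := Hb i2 i4.
have b30 := Hb i3 i0.
have b31 := Hb i3 i1.
have b32 := Hb i3 i2.
have b33 := Hb i3 i3.
have b34 := Hb i3 i4.
have b40 := Hb i4 i0.
have b41 := Hb i4 i1.
have b42 := Hb i4 i2.
have b43 := Hb i4 i3.
have b44 := Hb i4 i4.
have Hb01 : forall x : R, x = 0 \/ x = 1 -> 0 <= x <= 1 by move=> x [->|->]; rewrite ?lexx ?ler01.
have /andP[a00 a00'] := Hb01 _ b00.
have /andP[a01 a01'] := Hb01 _ b01.
have /andP[a02 a02'] := Hb01 _ b02.
have /andP[a03 a03'] := Hb01 _ b03.
have /andP[a04 a04'] := Hb01 _ b04.
have /andP[a10 a10'] := Hb01 _ b10.
have /andP[a11 a11'] := Hb01 _ b11.
have /andP[a12 a12'] := Hb01 _ b12.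
have /andP[a13 a13'] := Hb01 _ b13.
have /andP[a14 a14'] := Hb01 _ b14.
have /andP[a20 a20'] := Hb01 _ b20.
have /andP[a21 a21'] := Hb01 _ b21.
have /andP[a22 a22'] := Hb01 _ b22.
have /andP[a23 a23'] := Hb01 _ b23.
have /andP[a24 a24'] := Hb01 _ b24.
have /andP[a30 a30'] := Hb01 _ b30.
have /andP[a31 a31'] := Hb01 _ b31.
have /andP[a32 a32'] := Hb01 _ b32.
have /andP[a33 a33'] := Hb01 _ b33.
have /andP[a34 a34'] := Hb01 _ b34.
have /andP[a40 a40'] := Hb01 _ b40.
have /andP[a41 a41'] := Hb01 _ b41.
have /andP[a42 a42'] := Hb01 _ b42.
have /andP[a43 a43'] := Hb01 _ b43.
have /andP[a44 a44'] := Hb01 _ b44.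
have p10 : w i1 i0 <= delta i1 * a i1 i0 by case: b10 => Ea; rewrite Ea ?mulr0 ?mulr1 // -Ea.
have p11 : w i1 i1 <= delta i1 * a i1 i1 by case: b11 => Ea; rewrite Ea ?mulr0 ?mulr1 // -Ea.
have p12 : w i1 i2 <= delta i1 * a i1 i2 by case: b12 => Ea; rewrite Ea ?mulr0 ?mulr1 // -Ea.
have p13 : w i1 i3 <= delta i1 * a i1 i3 by case: b13 => Ea; rewrite Ea ?mulr0 ?mulr1 // -Ea.
have p14 : w i1 i4 <= delta i1 * a i1 i4 by case: b14 => Ea; rewrite Ea ?mulr0 ?mulr1 // -Ea.
have p20 : w i2 i0 <= delta i2 * a i2 i0 by case: b20 => Ea; rewrite Ea ?mulr0 ?mulr1 // -Ea.
have p21 : w i2 i1 <= delta i2 * a i2 i1 by case: b21 => Ea; rewrite Ea ?mulr0 ?mulr1 // -Ea.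
have p22 : w i2 i2 <= delta i2 * a i2 i2 by case: b22 => Ea; rewrite Ea ?mulr0 ?mulr1 // -Ea.
have p23 : w i2 i3 <= delta i2 * a i2 i3 by case: b23 => Ea; rewrite Ea ?mulr0 ?mulr1 // -Ea.
have p24 : w i2 i4 <= delta i2 * a i2 i4 by case: b24 => Ea; rewrite Ea ?mulr0 ?mulr1 // -Ea.
have p30 : w i3 i0 <= delta i3 * a i3 i0 by case: b30 => Ea; rewrite Ea ?mulr0 ?mulr1 // -Ea.
have p31 : w i3 i1 <= delta i3 * a i3 i1 by case: b31 => Ea; rewrite Ea ?mulr0 ?mulr1 // -Ea.
have p32 : w i3 i2 <= delta i3 * a i3 i2 by case: b32 => Ea; rewrite Ea ?mulr0 ?mulr1 // -Ea.
have p33 : w i3 i3 <= delta i3 * a i3 i3 by case: b33 => Ea; rewrite Ea ?mulr0 ?mulr1 // -Ea.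
have p34 : w i3 i4 <= delta i3 * a i3 i4 by case: b34 => Ea; rewrite Ea ?mulr0 ?mulr1 // -Ea.
have HP : 1 <= P a by rewrite /P; clear -f0 Hs a00 a01 a02 a03 a04 a10 a11 a12 a13 a14 a20 a21 a22 a23 a24 a30 a31 a32 a33 a34 a40 a41 a42 a43 a44; lra.
split=> //.
clear -HP f0 f1 f2 f3 f4 Hs Ht a00 a01 a02 a03 a04 a10 a11 a12 a13 a14 a20 a21 a22 a23 a24 a30 a31 a32 a33 a34 a40 a41 a42 a43 a44 p10 p11 p12 p13 p14 p20 p21 p22 p23 p24 p30 p31 p32 p33 p34 db1 db2 db3 db0 db4 Hd.
have O1 : a i1 i0 + a i1 i1 + a i1 i2 + a i1 i3 + a i1 i4 <= (1 + 2 * (P a - 1)) by rewrite /P; clear -f0 f1 f2 f3 f4 Hs Ht a00 a01 a02 a03 a04 a10 a11 a12 a13 a14 a20 a21 a22 a23 a24 a30 a31 a32 a33 a34 a40 a41 a42 a43 a44; lra.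
have Q1 := ler_wpM2l db1 O1.
have O2 : a i2 i0 + a i2 i1 + a i2 i2 + a i2 i3 + a i2 i4 <= (1 + 2 * (P a - 1)) by rewrite /P; clear -f0 f1 f2 f3 f4 Hs Ht a00 a01 a02 a03 a04 a10 a11 a12 a13 a14 a20 a21 a22 a23 a24 a30 a31 a32 a33 a34 a40 a41 a42 a43 a44; lra.
have Q2 := ler_wpM2l db2 O2.
have O3 : a i3 i0 + a i3 i1 + a i3 i2 + a i3 i3 + a i3 i4 <= (1 + 2 * (P a - 1)) by rewrite /P; clear -f0 f1 f2 f3 f4 Hs Ht a00 a01 a02 a03 a04 a10 a11 a12 a13 a14 a20 a21 a22 a23 a24 a30 a31 a32 a33 a34 a40 a41 a42 a43 a44; lra.
have Q3 := ler_wpM2l db3 O3.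
have OO : a i1 i0 + a i1 i1 + a i1 i2 + a i1 i3 + a i1 i4 + a i2 i0 + a i2 i1 + a i2 i2 + a i2 i3 + a i2 i4 + a i3 i0 + a i3 i1 + a i3 i2 + a i3 i3 + a i3 i4 <= 2 + 2 * (P a - 1) by rewrite /P; clear -f0 f1 f2 f3 f4 Hs Ht a00 a01 a02 a03 a04 a10 a11 a12 a13 a14 a20 a21 a22 a23 a24 a30 a31 a32 a33 a34 a40 a41 a42 a43 a44; lra.
have K0 : 0 <= (1 + 2 * (P a - 1)) by lra.
have D3 : delta i1 + delta i2 + delta i3 <= 1 by clear -Hd db0 db4; lra.
have Q4 := ler_wpM2r K0 D3.
move: Q1 Q2 Q3 Q4 OO; rewrite /G /P => Q1 Q2 Q3 Q4 OO.
clear -Q1 Q2 Q3 Q4 OO p10 p11 p12 p13 p14 p20 p21 p22 p23 p24 p30 p31 p32 p33 p34.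
lra.
Qed.
End S.

Lemma V_cases (Q : V -> Prop) : Q i0 -> Q i1 -> Q i2 -> Q i3 -> Q i4 -> forall j, Q j.
Proof.
move=> H0 H1 H2 H3 H4 [[|[|[|[|[|k]]]]] Hk].
- by rewrite (_ : Ordinal Hk = i0) //; apply: val_inj.
- by rewrite (_ : Ordinal Hk = i1) //; apply: val_inj.
- by rewrite (_ : Ordinal Hk = i2) //; apply: val_inj.
- by rewrite (_ : Ordinal Hk = i3) //; apply: val_inj.
- by rewrite (_ : Ordinal Hk = i4) //; apply: val_inj.
- by exfalso; move: Hk; rewrite !ltnS ltn0.
Qed.

Section W.
Variable R : realFieldType.
Definition aL (i j : V) : R := match val i, val j with
 | 0%N, 1%N => 1 | 1%N, 2%N => 1/2 | 1%N, 3%N => 1/2 | 2%N, 4%N => 1/2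
 | 3%N, 4%N => 1/2 | 4%N, 0%N => 1 | _, _ => 0 end.
Definition wL (i j : V) : R := match val i, val j with
 | 1%N, 2%N => 1/2 | 1%N, 3%N => 1/2 | 2%N, 4%N => 1/4
 | 3%N, 4%N => 1/4 | _, _ => 0 end.
Definition dL (i : V) : R := match val i with
 | 1%N => 1/2 | 2%N => 1/4 | 3%N => 1/4 | _ => 0 end.
Definition aM (i j : V) : R := match val i, val j with
 | 0%N, 1%N => 1 | 1%N, 2%N => 1 | 2%N, 4%N => 1 | 4%N, 0%N => 1 | _, _ => 0 end.
Definition wM (i j : V) : R := match val i, val j with
 | 1%N, 2%N => 1 | _, _ => 0 end.
Definition dM (i : V) : R := match val i with
 | 1%N => 1 | _ => 0 end.

Lemma LP_wit : LP_feasible aL wL dL.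
Proof.
split; last by apply: V_cases; apply: V_cases; apply/andP; rewrite /aL /=; split; lra.
rewrite /common_constraints src_i0 snk_i4 /Gamma !sum5 /aL /dL /=.
split; first by apply: V_cases; rewrite !sum5 /=; lra.
split; first lra. split; first lra.
split; first by apply: V_cases; apply: V_cases; rewrite /wL /=; split; lra.
split; first lra.
split; first by apply: V_cases; apply/andP; rewrite /=; split; lra.
by apply: V_cases; apply: V_cases; rewrite /wL /=; lra.
Qed.

Lemma MIP_wit : MIP_feasible aM wM dM.
Proof.
split; last by apply: V_cases; apply: V_cases; rewrite /aM /=; (left; done) || (right; done).
rewrite /common_constraints src_i0 snk_i4 /Gamma !sum5 /aM /dM /=.
split; first by apply: V_cases; rewrite !sum5 /=; lra.
split; first lra. split; first lra.
split; first by apply: V_cases; apply: V_cases; rewrite /wM /=; split; lra.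
split; first lra.
split; first by apply: V_cases; apply/andP; rewrite /=; split; lra.
by apply: V_cases; apply: V_cases; rewrite /wM /=; lra.
Qed.

Lemma LP_val M : objective M aL wL = 7/2 - M.
Proof. rewrite obj_eq /G /P /aL /wL /=; lra. Qed.
Lemma MIP_val M : objective M aM wM = 3 - M.
Proof. rewrite obj_eq /G /P /aM /wM /=; lra. Qed.
End W.

Theorem mainTheorem1 (R : realFieldType) :
  exists M0 : R, forall M : R, 0 < M -> M0 <= M ->
    exists vLP vMIP : R,
      [/\ is_opt_value (@LP_feasible R) (objective M) vLP,
          is_opt_value (@MIP_feasible R) (objective M) vMIP &
          vMIP < vLP].
Proof.
exists 10 => M HM0 HM.
exists (7/2 - M), (3 - M); split.
- split; first by exists (@aL R), (@wL R), (@dL R); split; [exact: LP_wit | exact: LP_val].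
  move=> a w d Hf; have [HP HG] := @LP_bound R _ _ _ Hf; rewrite obj_eq.
  have : 0 <= (M - 10) * (P R a - 1) by apply: mulr_ge0; lra.
  lra.
- split; first by exists (@aM R), (@wM R), (@dM R); split; [exact: MIP_wit | exact: MIP_val].
  move=> a w d Hf; have [HP HG] := @MIP_bound R _ _ _ Hf; rewrite obj_eq.
  have : 0 <= (M - 4) * (P R a - 1) by apply: mulr_ge0; lra.
  lra.
- lra.
Qed.
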